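(* Suppose $G$ consists of a single strongly connected component and at least one vertex of $G$ has out-degree at least two. Then the flow $\psi$ on $\Delta$ has sensitive dependence on initial conditions.
   Context: $G$ is a finite directed graph (loops allowed) with vertex set $V$. $\Omega$ is the set of bi-infinite paths in $G$, i.e. sequences $(x_i)_{i\in\mathbb Z}\in V^{\mathbb Z}$ such that for every $i$ there is an edge from $x_i$ to $x_{i+1}$. Fix $h>0$. $\bar\Delta$ is the set of functions $x:\mathbb R\to V$ that are constant on each interval $[nh,(n+1)h)$, $n\in\mathbb Z$, and satisfy $(x(ih))_{i\in\mathbb Z}\in\Omega$. $\Delta=\{x(\cdot+t): x\in\bar\Delta,\ t\in\mathbb R\}$, with metric $d(x,y)=\sum_{i\in\mathbb Z}4^{-|i|}\frac1h\int_{ih}^{(i+1)h}\delta(x,y,t)\,dt$, where $\delta(x,y,t)=1$ if $x(t)\ne y(t)$ and $0$ otherwise. The flow $\psi:\mathbb R\times\Delta\to\Delta$ is $\psi(t,x)=x(\cdot+t)$. ''$G$ consists of a single strongly connected component'' means that for all $u,v\in V$ (including $u=v$) there is a directed path of positive length from $u$ to $v$. A flow $\Phi$ on a metric space $X$ has sensitive dependence on initial conditions if there is $\delta>0$ such that for every $x\in X$ and every neighborhood $B$ of $x$ there are $y\in B$ and $t>0$ with $d(\Phi_t(x),\Phi_t(y))>\delta$. *)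

(* Defs.v *)
From Stdlib Require Import Reals ZArith List Relations Classical ClassicalEpsilon ClassicalDescription.
Open Scope R_scope.

Section Defs.
Context {V : Type} (e : V -> V -> Prop) (h : R).

Definition finite_type (T : Type) : Prop := exists l : list T, forall v, In v l.

(* single strongly connected component: path of positive length between any u v *)
Definition strongly_connected : Prop := forall u v : V, clos_trans V e u v.

Definition has_outdeg_ge2 : Prop :=
  exists v w1 w2 : V, w1 <> w2 /\ e v w1 /\ e v w2.

Definition in_Omega (s : Z -> V) : Prop := forall i : Z, e (s i) (s (i + 1)%Z).

Definition in_Delta_bar (x : R -> V) : Prop :=
  (forall (n : Z) (t : R), IZR n * h <= t < (IZR n + 1) * h -> x t = x (IZR n * h)) /\
  in_Omega (fun i : Z => x (IZR i * h)).

Definition in_Delta (x : R -> V) : Prop :=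
  exists (xb : R -> V) (t : R), in_Delta_bar xb /\ forall s, x s = xb (s + t).

Definition psi (t : R) (x : R -> V) : R -> V := fun s => x (s + t).

Definition delta (x y : R -> V) (t : R) : R :=
  if excluded_middle_informative (x t <> y t) then 1 else 0.

(* Riemann integral of f over [a,b] (value chosen when f is Riemann integrable;
   RiemannInt does not depend on the integrability proof) *)
Definition integral (f : R -> R) (a b : R) : R :=
  epsilon (inhabits 0) (fun l => exists pr : Riemann_integrable f a b, RiemannInt pr = l).

Definition d_term (x y : R -> V) (i : Z) : R :=
  / (4 ^ Z.abs_nat i) * (/ h * integral (delta x y) (IZR i * h) ((IZR i + 1) * h)).

Definition d_partial (x y : R -> V) (N : nat) : R :=
  sum_f_R0 (fun k => d_term x y (Z.of_nat k - Z.of_nat N)%Z) (2 * N).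

Definition d (x y : R -> V) : R :=
  epsilon (inhabits 0) (fun l => Un_cv (d_partial x y) l).

Definition is_nbhd (x : R -> V) (B : (R -> V) -> Prop) : Prop :=
  (forall y, B y -> in_Delta y) /\
  exists eps, eps > 0 /\ forall y, in_Delta y -> d x y < eps -> B y.

Definition sensitive_dependence : Prop :=
  exists dl : R, dl > 0 /\
    forall x, in_Delta x -> forall B, is_nbhd x B ->
      exists y t, B y /\ t > 0 /\ d (psi t x) (psi t y) > dl.

End Defs.

(* Main.v *)
Require Import Defs.
From Stdlib Require Import Reals Lra Lia ZArith List Relations Operators_Properties Classical ClassicalEpsilon ClassicalDescription RiemannInt RiemannInt_SF RList Ranalysis1.
Open Scope R_scope.

Definition fl (r : R) : Z := (up r - 1)%Z.

Lemma fl_spec r : IZR (fl r) <= r < IZR (fl r) + 1.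
Proof. unfold fl. destruct (archimed r) as [H1 H2]. rewrite minus_IZR. lra. Qed.

Lemma fl_unique r n : IZR n <= r < IZR n + 1 -> fl r = n.
Proof.
  intros [H1 H2]. unfold fl. rewrite <- (tech_up r (n+1)). lia.
  rewrite plus_IZR; lra. rewrite plus_IZR; lra.
Qed.

Lemma fl_mono r s : r <= s -> (fl r <= fl s)%Z.
Proof.
  intros H. destruct (fl_spec r), (fl_spec s).
  assert (H4 : IZR (fl r) < IZR (fl s + 1)) by (rewrite plus_IZR; lra).
  apply lt_IZR in H4. lia.
Qed.

Lemma fl_loc h c u k : h > 0 -> IZR k * h <= u + c < (IZR k + 1) * h -> fl ((u + c)/h) = k.
Proof.
  intros hp [H1 H2]. apply fl_unique.
  assert (E : (u+c)/h*h = u + c) by (field; lra).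
  set (w := (u+c)/h) in *. split; nra.
Qed.

Lemma SF1 f a b c : a <= b -> (forall x, a < x < b -> f x = c) -> IsStepFun f a b.
Proof.
  intros Hab H. exists (a :: b :: nil). exists (c :: nil).
  unfold adapted_couple. split; [|split; [|split; [|split]]].
  - intros i Hi. simpl in Hi. destruct i; [simpl; lra| lia].
  - simpl. unfold Rmin. destruct (Rle_dec a b); lra.
  - simpl. unfold Rmax. destruct (Rle_dec a b); lra.
  - reflexivity.
  - intros i Hi. simpl in Hi. destruct i; [|lia]. simpl. intros x Hx.
    unfold open_interval in Hx. apply H. exact Hx.
Qed.

Lemma SF_int f a b : IsStepFun f a b -> Riemann_integrable f a b.
Proof.
  intros X eps. exists (mkStepFun X). exists (mkStepFun (StepFun_P4 a b 0)). split.
  - intros t _. simpl. unfold fct_cte. rewrite Rminus_diag, Rabs_R0. lra.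
  - rewrite StepFun_P18. rewrite Rmult_0_l, Rabs_R0. apply cond_pos.
Qed.

Lemma integral_eq f a b (pr : Riemann_integrable f a b) : integral f a b = RiemannInt pr.
Proof.
  unfold integral.
  destruct (epsilon_spec (inhabits 0) (fun l => exists pr, RiemannInt (f:=f) (a:=a) (b:=b) pr = l)) as [pr' H].
  { exists (RiemannInt pr), pr; reflexivity. }
  rewrite <- H. apply RiemannInt_P5.
Qed.

Lemma step_int (h c a : R) (g : R -> R) : h > 0 ->
  (forall u v, fl ((u + c)/h) = fl ((v + c)/h) -> g u = g v) ->
  Riemann_integrable g a (a + h).
Proof.
  intros hp Hg.
  set (r := (a + c)/h).
  assert (E1 : r * h = a + c) by (unfold r; field; lra).
  destruct (fl_spec r) as [F1 F2].
  set (n := (fl r + 1)%Z).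
  assert (Hn : IZR n = IZR (fl r) + 1) by (unfold n; rewrite plus_IZR; reflexivity).
  set (p := IZR n * h - c).
  assert (G1 : IZR n > r) by lra.
  assert (G2 : IZR n <= r + 1) by lra.
  assert (Hap : a < p) by (unfold p; assert ((IZR n - r) * h > 0) by (apply Rmult_gt_0_compat; lra); nra).
  assert (Hpb : p <= a + h) by (unfold p; assert ((r + 1 - IZR n) * h >= 0) by (apply Rle_ge, Rmult_le_pos; lra); nra).
  assert (Hfl : IZR (fl r) * h <= r * h) by (apply Rmult_le_compat_r; lra).
  assert (Hnh : IZR n * h = (IZR (fl r) + 1) * h) by (rewrite Hn; ring).
  assert (Hnh2 : (IZR n + 1) * h = IZR n * h + h) by ring.
  assert (Hpd : p = IZR n * h - c) by reflexivity.
  clearbody p.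
  apply RiemannInt_P24 with p.
  - apply SF_int. apply (SF1 g a p (g ((a+p)/2))). lra.
    intros x Hx. apply Hg.
    rewrite (fl_loc h c x (fl r)) by (auto; split; lra).
    rewrite (fl_loc h c ((a+p)/2) (fl r)) by (auto; split; lra). reflexivity.
  - apply SF_int. apply (SF1 g p (a+h) (g ((p+(a+h))/2))). lra.
    intros x Hx. apply Hg.
    rewrite (fl_loc h c x n) by (auto; split; lra).
    rewrite (fl_loc h c ((p+(a+h))/2) n) by (auto; split; lra). reflexivity.
Qed.

Lemma int_bounds h c a g : h > 0 -> (forall u v, fl ((u + c)/h) = fl ((v + c)/h) -> g u = g v) ->
  (forall u, 0 <= g u <= 1) -> 0 <= integral g a (a+h) <= h.
Proof.
  intros hp Hg Hb. pose proof (step_int h c a g hp Hg) as pr. rewrite (integral_eq _ _ _ pr). split.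
  - pose proof (RiemannInt_P15 (RiemannInt_P14 a (a+h) 0)) as E.
    assert (RiemannInt (RiemannInt_P14 a (a+h) 0) <= RiemannInt pr).
    { apply RiemannInt_P19. lra. intros. unfold fct_cte. apply Hb. }
    lra.
  - pose proof (RiemannInt_P15 (RiemannInt_P14 a (a+h) 1)) as E.
    assert (RiemannInt pr <= RiemannInt (RiemannInt_P14 a (a+h) 1)).
    { apply RiemannInt_P19. lra. intros. unfold fct_cte. apply Hb. }
    lra.
Qed.

Lemma int_val h c a g k : h > 0 -> (forall u v, fl ((u + c)/h) = fl ((v + c)/h) -> g u = g v) ->
  (forall u, a < u < a + h -> g u = k) -> integral g a (a+h) = k * h.
Proof.
  intros hp Hg Hk. pose proof (step_int h c a g hp Hg) as pr. rewrite (integral_eq _ _ _ pr).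
  rewrite (RiemannInt_P18 pr (RiemannInt_P14 a (a+h) k)).
  rewrite RiemannInt_P15. ring. lra. intros; unfold fct_cte; auto.
Qed.

Lemma dpart_S {V} h (X Y : R -> V) N :
  d_partial h X Y (S N) = d_term h X Y (- (Z.of_nat N + 1))%Z + d_partial h X Y N + d_term h X Y (Z.of_nat N + 1)%Z.
Proof.
  unfold d_partial. replace (2 * S N)%nat with (S (S (2*N))) by lia.
  rewrite tech5. rewrite decomp_sum by lia. simpl Init.Nat.pred. cbv beta.
  rewrite (sum_eq _ (fun k => d_term h X Y (Z.of_nat k - Z.of_nat N)%Z)).
  2:{ intros i _. f_equal. lia. }
  replace (Z.of_nat 0 - Z.of_nat (S N))%Z with (- (Z.of_nat N + 1))%Z by lia.
  replace (Z.of_nat (S (S (2 * N))) - Z.of_nat (S N))%Z with (Z.of_nat N + 1)%Z by lia.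
  reflexivity.
Qed.

Lemma dpart_0 {V} h (X Y : R -> V) : d_partial h X Y 0 = d_term h X Y 0.
Proof. reflexivity. Qed.

Lemma abs_nat_S N : Z.abs_nat (- (Z.of_nat N + 1)) = S N /\ Z.abs_nat (Z.of_nat N + 1) = S N.
Proof. split; lia. Qed.

Lemma inv4S N : / 4 ^ S N = / 4 * / 4 ^ N.
Proof. simpl. rewrite Rinv_mult. reflexivity. Qed.

Lemma inv4pos N : 0 < / 4 ^ N.
Proof. apply Rinv_0_lt_compat, pow_lt. lra. Qed.

Definition TB {V} h (X Y : R -> V) := forall i, 0 <= d_term h X Y i <= / 4 ^ Z.abs_nat i.

Lemma dpart_grow {V} h (X Y : R -> V) (Hb : TB h X Y)  : Un_growing (d_partial h X Y).
Proof.
  intros n. rewrite dpart_S. pose proof (Hb (- (Z.of_nat n + 1))%Z). pose proof (Hb (Z.of_nat n + 1)%Z). lra.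
Qed.

Lemma dpart_bnd {V} h (X Y : R -> V) (Hb : TB h X Y) N : d_partial h X Y N <= 5/3 - 2/3 * / 4 ^ N.
Proof.
  induction N.
  - rewrite dpart_0. pose proof (Hb 0%Z). simpl in *. lra.
  - rewrite dpart_S. pose proof (Hb (- (Z.of_nat N + 1))%Z). pose proof (Hb (Z.of_nat N + 1)%Z).
    destruct (abs_nat_S N) as [E1 E2]. rewrite E1 in H. rewrite E2 in H0. rewrite inv4S in *. lra.
Qed.

Lemma d_cv {V} h (X Y : R -> V) (Hb : TB h X Y)  : Un_cv (d_partial h X Y) (d h X Y).
Proof.
  unfold d. apply epsilon_spec.
  destruct (growing_cv _ (dpart_grow h X Y Hb)) as [l Hl].
  - exists (5/3). intros x [i ->]. pose proof (dpart_bnd h X Y Hb i). pose proof (inv4pos i). lra.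
  - exists l; exact Hl.
Qed.

Lemma d_ge0 {V} h (X Y : R -> V) (Hb : TB h X Y)  : d_term h X Y 0 <= d h X Y.
Proof. rewrite <- dpart_0. apply growing_ineq. apply (dpart_grow h X Y Hb). apply (d_cv h X Y Hb). Qed.

Lemma d_small {V} h (X Y : R -> V) (Hb : TB h X Y) M : (forall i, (Z.abs_nat i <= M)%nat -> d_term h X Y i = 0) ->
  d h X Y <= 2/3 * / 4 ^ M.
Proof.
  intros Hz.
  assert (Hm : forall N, ((N <= M)%nat -> d_partial h X Y N = 0) /\
                        ((M <= N)%nat -> d_partial h X Y N <= 2/3 * (/ 4 ^ M - / 4 ^ N))).
  { induction N.
    - rewrite dpart_0. rewrite Hz by (simpl; lia). split; intros. reflexivity.
      replace M with 0%nat by lia. lra.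
    - destruct IHN as [I1 I2]. rewrite dpart_S. destruct (abs_nat_S N) as [E1 E2].
      destruct (Nat.le_gt_cases (S N) M).
      + rewrite I1 by lia. rewrite !Hz by lia. split; intros. ring. replace M with (S N) by lia. lra.
      + split; intros. lia.
        pose proof (Hb (- (Z.of_nat N + 1))%Z). pose proof (Hb (Z.of_nat N + 1)%Z).
        rewrite E1 in H1. rewrite E2 in H2. rewrite inv4S in *.
        assert (d_partial h X Y N <= 2/3 * (/ 4 ^ M - / 4 ^ N)) by (apply I2; lia). lra. }
  apply Rle_cv_lim with (d_partial h X Y) (fun _ => 2/3 * / 4 ^ M).
  - intros n. destruct (Nat.le_gt_cases n M).
    + rewrite (proj1 (Hm n)) by lia. pose proof (inv4pos M). lra.
    + pose proof (proj2 (Hm n)). pose proof (inv4pos n). assert (d_partial h X Y n <= 2/3 * (/ 4 ^ M - / 4 ^ n)) by (apply H0; lia). lra.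
  - apply (d_cv h X Y Hb).
  - intros eps He. exists 0%nat. intros. rewrite R_dist_eq. exact He.
Qed.

Definition npath {V} (e : V -> V -> Prop) (q : nat -> V) := forall n, e (q n) (q (S n)).

Definition ncons {V} (u : V) (q : nat -> V) : nat -> V := fun n => match n with 0 => u | S k => q k end.

Lemma ncons_path {V} (e : V -> V -> Prop) u q : e u (q 0%nat) -> npath e q -> npath e (ncons u q).
Proof. intros H1 H2 [|n]; simpl; auto. Qed.

Lemma cont {V} (e : V -> V -> Prop) : (forall w, exists z, e w z) ->
  forall w, exists q, q 0%nat = w /\ npath e q.
Proof.
  intros H w.
  set (sf := fun w => proj1_sig (constructive_indefinite_description _ (H w))).
  assert (Hs : forall w, e w (sf w)) by (intro; unfold sf; destruct (constructive_indefinite_description _ _); auto).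
  exists (fun n => Nat.iter n sf w). split. reflexivity. intros n. simpl. apply Hs.
Qed.

Lemma diff_path {V} (e : V -> V -> Prop) (v w1 w2 : V) :
  (forall w, exists z, e w z) -> w1 <> w2 -> e v w1 -> e v w2 ->
  forall u, clos_trans_1n V e u v -> forall p, p 0%nat = u -> npath e p ->
  exists q, q 0%nat = u /\ npath e q /\ exists m, q m <> p m.
Proof.
  intros Hs Hw Hv1 Hv2 u Hu. remember v as v' eqn:Ev. induction Hu as [u y Huy | u y z Huy Hyz IH]; intros p Hp0 Hp; subst.
  - destruct (classic (p 1%nat = v)) as [E|NE].
    + assert (exists w, e v w /\ w <> p 2%nat) as [w [Hvw Hwp]].
      { destruct (classic (w1 = p 2%nat)) as [Ew|Ew]. - exists w2. split. exact Hv2. congruence. - exists w1. split. exact Hv1. exact Ew. }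
      destruct (cont e Hs w) as [c [Hc0 Hc]].
      exists (ncons (p 0%nat) (ncons v c)). split. reflexivity. split.
      * apply ncons_path. simpl; auto. apply ncons_path. rewrite Hc0; auto. auto.
      * exists 2%nat. simpl. congruence.
    + destruct (cont e Hs v) as [c [Hc0 Hc]].
      exists (ncons (p 0%nat) c). split. reflexivity. split.
      * apply ncons_path. rewrite Hc0; auto. auto.
      * exists 1%nat. simpl. congruence.
  - destruct (classic (p 1%nat = y)) as [E|NE].
    + destruct (IH eq_refl Hv1 Hv2 (fun n => p (S n)) E (fun n => Hp (S n))) as [q [Hq0 [Hq [m Hm]]]].
      exists (ncons (p 0%nat) q). split. reflexivity. split.
      * apply ncons_path. rewrite Hq0; auto. auto.
      * exists (S m). simpl. auto.
    + destruct (cont e Hs y) as [c [Hc0 Hc]].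
      exists (ncons (p 0%nat) c). split. reflexivity. split.
      * apply ncons_path. rewrite Hc0; auto. auto.
      * exists 1%nat. simpl. congruence.
Qed.

Lemma delta01 {V} (X Y : R -> V) u : 0 <= delta X Y u <= 1.
Proof. unfold delta. destruct (excluded_middle_informative _); lra. Qed.

Lemma delta_step {V} h c (X Y : R -> V) A B :
  (forall u, X u = A (fl ((u + c)/h))) -> (forall u, Y u = B (fl ((u + c)/h))) ->
  forall u v, fl ((u + c)/h) = fl ((v + c)/h) -> delta X Y u = delta X Y v.
Proof.
  intros HX HY u v E. unfold delta. rewrite !HX, !HY, E. reflexivity.
Qed.

Lemma term_bound {V} h c (X Y : R -> V) A B : h > 0 ->
  (forall u, X u = A (fl ((u + c)/h))) -> (forall u, Y u = B (fl ((u + c)/h))) ->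
  TB h X Y.
Proof.
  intros hp HX HY i. unfold d_term.
  replace ((IZR i + 1) * h) with (IZR i * h + h) by ring.
  pose proof (int_bounds h c (IZR i * h) (delta X Y) hp (delta_step h c X Y A B HX HY) (delta01 X Y)) as [I1 I2].
  pose proof (inv4pos (Z.abs_nat i)).
  set (I := integral (delta X Y) (IZR i * h) (IZR i * h + h)) in *.
  assert (0 <= / h * I <= 1).
  { assert (/ h * h = 1) by (field; lra). assert (0 < / h) by (apply Rinv_0_lt_compat; lra). split; nra. }
  split; nra.
Qed.

Lemma term_zero {V} h c (X Y : R -> V) A B i : h > 0 ->
  (forall u, X u = A (fl ((u + c)/h))) -> (forall u, Y u = B (fl ((u + c)/h))) ->
  (forall u, IZR i * h < u < IZR i * h + h -> X u = Y u) -> d_term h X Y i = 0.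
Proof.
  intros hp HX HY Hz. unfold d_term.
  replace ((IZR i + 1) * h) with (IZR i * h + h) by ring.
  rewrite (int_val h c (IZR i * h) (delta X Y) 0 hp (delta_step h c X Y A B HX HY)). ring.
  intros u Hu. unfold delta. destruct (excluded_middle_informative _) as [n|n]; auto.
  exfalso. apply n. apply Hz. exact Hu.
Qed.

Lemma term_one {V} h c (X Y : R -> V) A B : h > 0 ->
  (forall u, X u = A (fl ((u + c)/h))) -> (forall u, Y u = B (fl ((u + c)/h))) ->
  (forall u, 0 < u < h -> X u <> Y u) -> d_term h X Y 0 = 1.
Proof.
  intros hp HX HY Hz. unfold d_term.
  replace ((IZR 0 + 1) * h) with (IZR 0 * h + h) by ring.
  rewrite (int_val h c (IZR 0 * h) (delta X Y) 1 hp (delta_step h c X Y A B HX HY)).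
  simpl. field. lra.
  intros u Hu. unfold delta. destruct (excluded_middle_informative _) as [n|n]; auto.
  exfalso. apply n. apply Hz. lra.
Qed.

Lemma fl_loc0 h u k : h > 0 -> IZR k * h <= u < (IZR k + 1) * h -> fl (u/h) = k.
Proof. intros hp Hk. replace u with (u + 0) by ring. apply fl_loc; auto. lra. Qed.

Lemma fl_bounds h u : h > 0 -> IZR (fl (u/h)) * h <= u < (IZR (fl (u/h)) + 1) * h.
Proof.
  intros hp. destruct (fl_spec (u/h)) as [F1 F2]. assert (E : u/h*h = u) by (field; lra).
  set (w := u/h) in *. split; nra.
Qed.

Lemma fl_int h i : h > 0 -> fl (IZR i * h / h) = i.
Proof. intros hp. apply fl_loc0; auto. split. lra. assert (0 < h) by lra. nra. Qed.

Theorem mainTheorem11 (V : Type) (e : V -> V -> Prop) (h : R) :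
  finite_type V -> h > 0 ->
  strongly_connected e -> has_outdeg_ge2 e ->
  sensitive_dependence e h.
Proof.
  intros _ hp Hsc [v [w1 [w2 [Hw [Hv1 Hv2]]]]].
  assert (Hs : forall w, exists z, e w z).
  { intros w. pose proof (clos_trans_t1n _ _ _ _ (Hsc w w)) as H. inversion H; eauto. }
  exists (1/2). split; [lra|].
  intros x [xb [t0 [[Hstep Hom] Hx]]] B [HBD [eps [Heps HB]]].
  set (sq := fun i : Z => xb (IZR i * h)).
  assert (Hxb : forall u, xb u = sq (fl (u/h))).
  { intros u. unfold sq. apply (Hstep (fl (u/h)) u). apply fl_bounds; auto. }
  destruct (pow_lt_1_zero (/4) ltac:(rewrite Rabs_pos_eq; lra) (3/2*eps) ltac:(lra)) as [M HM].
  specialize (HM M (le_n M)). rewrite Rabs_pos_eq in HM by (apply pow_le; lra).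
  rewrite pow_inv in HM.
  set (K := fl (((IZR (Z.of_nat M) + 1) * h + t0) / h)).
  set (p := fun n : nat => sq (K + Z.of_nat n)%Z).
  assert (Hp : npath e p).
  { intros n. unfold p. replace (K + Z.of_nat (S n))%Z with (K + Z.of_nat n + 1)%Z by lia. apply Hom. }
  destruct (diff_path e v w1 w2 Hs Hw Hv1 Hv2 (sq K) (clos_trans_t1n _ _ _ _ (Hsc (sq K) v)) p
             ltac:(unfold p; f_equal; lia) Hp) as [q [Hq0 [Hq [m Hm]]]].
  assert (Hm0 : m <> 0%nat).
  { intros ->. apply Hm. rewrite Hq0. unfold p. f_equal. lia. }
  set (r := fun i : Z => if Z.leb i K then sq i else q (Z.to_nat (i - K))).
  assert (Hr : forall i, (i <= K)%Z -> r i = sq i).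
  { intros i Hi. unfold r. rewrite (proj2 (Z.leb_le i K) Hi). reflexivity. }
  assert (Hr2 : forall n, r (K + Z.of_nat (S n))%Z = q (S n)).
  { intros n. unfold r. rewrite (proj2 (Z.leb_gt (K + Z.of_nat (S n)) K) ltac:(lia)). f_equal. lia. }
  assert (Hrom : in_Omega e r).
  { intros i. destruct (Z.lt_ge_cases i K).
    - rewrite !Hr by lia. apply Hom.
    - destruct (Z.eq_dec i K) as [->|Ne].
      + rewrite Hr by lia. replace (K + 1)%Z with (K + Z.of_nat 1)%Z by lia. rewrite Hr2.
        replace (sq K) with (q 0%nat). apply Hq.
      + replace i with (K + Z.of_nat (S (Z.to_nat (i - K) - 1)))%Z by lia.
        replace (K + Z.of_nat (S (Z.to_nat (i - K) - 1)) + 1)%Z with (K + Z.of_nat (S (S (Z.to_nat (i - K) - 1))))%Z by lia.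
        rewrite !Hr2. apply Hq. }
  set (yb := fun u => r (fl (u/h))).
  set (y := fun s => yb (s + t0)).
  assert (Hyd : in_Delta e h y).
  { exists yb, t0. split; [|reflexivity]. split.
    - intros n u Hu. unfold yb. rewrite (fl_loc0 h u n hp Hu).
      rewrite fl_int by exact hp. reflexivity.
    - intros i. unfold yb. rewrite !fl_int by exact hp. apply Hrom. }
  assert (HX : forall u, x u = sq (fl ((u + t0)/h))).
  { intros u. rewrite Hx. apply Hxb. }
  assert (HY : forall u, y u = r (fl ((u + t0)/h))) by reflexivity.
  assert (HBy : B y).
  { apply HB. exact Hyd.
    assert (Hz : d h x y <= 2/3 * / 4 ^ M).
    { apply d_small. apply (term_bound h t0 x y sq r hp HX HY).
      intros i Hi. apply (term_zero h t0 x y sq r i hp HX HY).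
      intros u Hu. rewrite HX, HY. symmetry. apply Hr. apply fl_mono.
      assert (Hi' : (i <= Z.of_nat M)%Z) by lia. apply IZR_le in Hi'.
      assert (IZR i * h <= IZR (Z.of_nat M) * h) by (apply Rmult_le_compat_r; lra).
      assert (0 < / h) by (apply Rinv_0_lt_compat; lra).
      unfold Rdiv. apply Rmult_le_compat_r. lra. nra. }
    lra. }
  set (j := (K + Z.of_nat m)%Z).
  set (t := IZR j * h - t0).
  exists y, t. split; [exact HBy|]. split.
  - unfold t. set (w := ((IZR (Z.of_nat M) + 1) * h + t0) / h).
    assert (Ew : w * h = (IZR (Z.of_nat M) + 1) * h + t0) by (unfold w; field; lra).
    destruct (fl_spec w) as [F1 F2]. assert (EK : fl w = K) by reflexivity. rewrite EK in F1, F2.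
    assert (Hj : (K + 1 <= j)%Z) by (unfold j; lia). apply IZR_le in Hj. rewrite plus_IZR in Hj.
    assert (HM0 : 0 <= IZR (Z.of_nat M)) by (apply IZR_le; lia).
    assert ((IZR j - w) * h > 0) by (apply Rmult_gt_0_compat; lra).
    nra.
  - assert (HX' : forall u, psi t x u = sq (fl ((u + (t + t0))/h))).
    { intros u. unfold psi. rewrite HX. f_equal. f_equal. f_equal. ring. }
    assert (HY' : forall u, psi t y u = r (fl ((u + (t + t0))/h))).
    { intros u. unfold psi. rewrite HY. f_equal. f_equal. f_equal. ring. }
    assert (T1 : d_term h (psi t x) (psi t y) 0 = 1).
    { apply (term_one h (t + t0) _ _ sq r hp HX' HY').
      intros u Hu. rewrite HX', HY'.
      assert (Ef : fl ((u + (t + t0)) / h) = j).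
      { apply fl_loc; auto. unfold t. lra. }
      rewrite Ef. unfold r. rewrite (proj2 (Z.leb_gt j K) ltac:(unfold j; lia)).
      replace (Z.to_nat (j - K)) with m by (unfold j; lia).
      intros E. apply Hm. rewrite <- E. reflexivity. }
    pose proof (d_ge0 h (psi t x) (psi t y) (term_bound h (t + t0) _ _ sq r hp HX' HY')). lra.
Qed.
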